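(* Let $k$ be a binary kernel on a non-empty set $\mathcal X$ such that the quotient set $\mathcal Q_k=\mathcal X_{\mathrm{ref}}/\!\sim_k$ is finite, say $\mathcal Q_k=\{Q_1,\dots,Q_d\}$. Define $\phi:\mathcal X\to\{0,1\}^d$ by $\phi(x)_i=1$ if $x\in\mathcal X_{\mathrm{ref}}$ and $Q_i=[x]_k$, and $\phi(x)_i=0$ otherwise. Then $\phi$ is a feature map of $k$, i.e. $k(x,y)=\langle\phi(x),\phi(y)\rangle$ for all $x,y\in\mathcal X$.
   Context: A kernel on $\mathcal X$ is a symmetric positive semidefinite function $k:\mathcal X\times\mathcal X\to\mathbb R$. A kernel $k$ is binary if $k(x,y)\in\{0,1\}$ for all $x,y$. The relation induced by $k$ is $\sim_k=\{(x,y): k(x,y)=1\}$. Let $\mathcal X_{\mathrm{ref}}=\{x\in\mathcal X: x\sim_k x\}$; on $\mathcal X_{\mathrm{ref}}$ the relation $\sim_k$ is an equivalence relation, $[x]_k$ denotes the equivalence class of $x\in\mathcal X_{\mathrm{ref}}$, and $\mathcal Q_k$ is the set of equivalence classes. *)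

(* Defs.v *)
From mathcomp Require Import all_boot all_order all_algebra.
From mathcomp Require Import boolp classical_sets reals.
Set Implicit Arguments. Unset Strict Implicit. Unset Printing Implicit Defensive.
Import Order.TTheory GRing.Theory Num.Theory.
Local Open Scope ring_scope.
Local Open Scope classical_set_scope.

Section Kernels.
Variables (R : realType) (X : Type).

Definition kernel_symmetric (k : X -> X -> R) : Prop :=
  forall x y, k x y = k y x.

Definition kernel_psd (k : X -> X -> R) : Prop :=
  forall (n : nat) (c : 'I_n -> R) (x : 'I_n -> X),
    0 <= \sum_(i < n) \sum_(j < n) c i * c j * k (x i) (x j).

Definition is_kernel (k : X -> X -> R) : Prop :=
  kernel_symmetric k /\ kernel_psd k.

Definition binary_kernel (k : X -> X -> R) : Prop :=
  is_kernel k /\ forall x y, k x y = 0 \/ k x y = 1.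

Definition krel (k : X -> X -> R) (x y : X) : Prop := k x y = 1.

Definition Xref (k : X -> X -> R) : set X := [set x | krel k x x].

(* equivalence class [x]_k (meaningful for x in X_ref) *)
Definition eqclass (k : X -> X -> R) (x : X) : set X := [set y | krel k x y].

Definition quotient_set (k : X -> X -> R) : set (set X) :=
  [set C | exists2 x, Xref k x & C = eqclass k x].

Definition phi (k : X -> X -> R) (d : nat) (Q : 'I_d -> set X)
  (x : X) (i : 'I_d) : R :=
  if `[< Xref k x /\ Q i = eqclass k x >] then 1 else 0.

End Kernels.

(* Main.v *)
Require Import Defs.
From mathcomp Require Import all_boot all_order all_algebra.
From mathcomp Require Import boolp classical_sets reals.
From mathcomp Require Import lra.
Import Order.TTheory GRing.Theory Num.Theory.
Local Open Scope ring_scope.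
Local Open Scope classical_set_scope.

Section S.
Variables (R : realType) (X : Type) (k : X -> X -> R) (hk : binary_kernel k).

Lemma psd2 x y : 0 <= k x x + k y y - k x y - k y x.
Proof.
case: hk => [[_ P] _].
have := P 2%N (fun i => nth 0 [:: 1; -1] i) (fun i => nth x [:: x; y] i).
rewrite !big_ord_recr !big_ord0 /=. lra.
Qed.

Lemma psd3 x y z : 0 <= k x x + k y y + k z z - k x y - k y x - k y z - k z y + k x z + k z x.
Proof.
case: hk => [[_ P] _].
have := P 3%N (fun i => nth 0 [:: 1; -1; 1] i) (fun i => nth x [:: x; y; z] i).
rewrite !big_ord_recr !big_ord0 /=. lra.
Qed.

Lemma refl_l x y : k x y = 1 -> k x x = 1 /\ k y y = 1.
Proof.
case: hk => [[S _] B] h.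
have := psd2 x y; rewrite (S y x) h.
case: (B x x) => ->; case: (B y y) => ->; lra.
Qed.

Lemma trans x y z : k x y = 1 -> k y z = 1 -> k x z = 1.
Proof.
case: hk => [[S _] B] h1 h2.
have [h3 h4] := refl_l x y h1. have [_ h5] := refl_l y z h2.
have := psd3 x y z; rewrite (S y x) (S z y) (S z x) h1 h2 h3 h4 h5.
case: (B x z) => -> //; lra.
Qed.
End S.

Arguments refl_l {R X k} hk {x y}.
Arguments trans {R X k} hk {x y z}.
Theorem proposition3 (R : realType) (X : Type) (X_ne : inhabited X)
  (k : X -> X -> R) (hk : binary_kernel k)
  (d : nat) (Q : 'I_d -> set X) (Qinj : injective Q)
  (Qenum : range Q = quotient_set k) :
  forall x y : X, k x y = \sum_(i < d) phi k Q x i * phi k Q y i.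
Proof.
have [[S _] B] := hk.
move=> x y.
have phi0 z : ~ Xref k z -> forall i, phi k Q z i = 0.
  by move=> nz i; rewrite /phi; case: asboolP => // -[].
have [xr|nxr] := pselect (Xref k x); last first.
  rewrite big1; last by move=> i _; rewrite phi0 ?mul0r.
  case: (B x y) => // h; exfalso; apply: nxr; exact: (proj1 (refl_l hk h)).
have [yr|nyr] := pselect (Xref k y); last first.
  rewrite big1; last by move=> i _; rewrite (phi0 y) ?mulr0.
  case: (B x y) => // h; exfalso; apply: nyr; exact: (proj2 (refl_l hk h)).
have : quotient_set k (eqclass k x) by exists x.
rewrite -Qenum => -[i0 _ Hi0].
rewrite (bigD1 i0) //= big1 ?addr0; last first.
  move=> i ni; rewrite {1}/phi; case: asboolP => [[_ E]|_]; last by rewrite mul0r.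
  by exfalso; move/eqP: ni; apply; apply: Qinj; rewrite E Hi0.
rewrite {1}/phi; case: asboolP => [_|[]]; last by split.
rewrite mul1r /phi; case: asboolP => [[_ E]|NE].
  have : eqclass k x y by rewrite -Hi0 E; exact: yr.
  by rewrite /eqclass /krel /= => ->.
case: (B x y) => // h; exfalso; apply: NE; split => //.
rewrite Hi0; apply/seteqP; split => z /=; rewrite /eqclass /krel /= => hz.
  by apply: (trans hk) hz; rewrite S.
exact: (trans hk) hz.
Qed.
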